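(* Let $X$ and $Y$ be separable metrizable spaces and let $f : X \to Y$ be an open-LC function from $X$ onto $Y$ such that $f^{-1}(y)$ is compact for every $y \in Y$. Then there are subsets $Y_0, Y_1, Y_2, \dots$ of $Y$ with $Y = \bigcup_{n\ge 0} Y_n$ such that for every $n \ge 1$ the restriction $f|_{f^{-1}(Y_n)} : f^{-1}(Y_n) \to Y_n$ is an open function, and the restriction $f|_{f^{-1}(Y_0)} : f^{-1}(Y_0) \to Y_0$ is a closed function.
   Context: A subset of a topological space is an LC-set (locally closed set) if it is the intersection of an open set and a closed set. A function $f : X \to Y$ (not necessarily continuous) is open-LC if for every open $U \subset X$ the image $f(U)$ is an LC-set in $Y$. A function is open (resp. closed) if it maps open (resp. closed) sets to open (resp. closed) sets of its image space. *)

(* Defs.v *)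
From Stdlib Require Import Reals List.
Open Scope R_scope.

Record Topology (T : Type) : Type := {
  is_open : (T -> Prop) -> Prop;
  open_full : is_open (fun _ => True);
  open_inter : forall U V, is_open U -> is_open V -> is_open (fun x => U x /\ V x);
  open_union : forall F : (T -> Prop) -> Prop,
      (forall U, F U -> is_open U) -> is_open (fun x => exists U, F U /\ U x)
}.
Arguments is_open {T} t U.

Definition is_closed {T} (t : Topology T) (F : T -> Prop) : Prop :=
  is_open t (fun x => ~ F x).

Definition is_metric {T} (d : T -> T -> R) : Prop :=
  (forall x y, 0 <= d x y) /\
  (forall x y, d x y = 0 <-> x = y) /\
  (forall x y, d x y = d y x) /\
  (forall x y z, d x z <= d x y + d y z).

Definition metric_open {T} (d : T -> T -> R) (U : T -> Prop) : Prop :=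
  forall x, U x -> exists eps, 0 < eps /\ forall y, d x y < eps -> U y.

Definition metrizable {T} (t : Topology T) : Prop :=
  exists d : T -> T -> R, is_metric d /\
    forall U, is_open t U <-> metric_open d U.

Definition countable_set {T} (D : T -> Prop) : Prop :=
  exists g : T -> nat, forall x y, D x -> D y -> g x = g y -> x = y.

Definition dense {T} (t : Topology T) (D : T -> Prop) : Prop :=
  forall U, is_open t U -> (exists x, U x) -> exists x, U x /\ D x.

Definition separable {T} (t : Topology T) : Prop :=
  exists D : T -> Prop, countable_set D /\ dense t D.

(* Compactness of a subset (equivalently, of it as a subspace) *)
Definition compact_set {T} (t : Topology T) (K : T -> Prop) : Prop :=
  forall C : (T -> Prop) -> Prop,
    (forall U, C U -> is_open t U) ->
    (forall x, K x -> exists U, C U /\ U x) ->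
    exists l : list (T -> Prop),
      (forall U, In U l -> C U) /\ (forall x, K x -> exists U, In U l /\ U x).

Definition image {X Y} (f : X -> Y) (A : X -> Prop) : Y -> Prop :=
  fun y => exists x, A x /\ f x = y.
Definition preimage {X Y} (f : X -> Y) (B : Y -> Prop) : X -> Prop :=
  fun x => B (f x).

Definition LC_set {T} (t : Topology T) (S : T -> Prop) : Prop :=
  exists O F, is_open t O /\ is_closed t F /\ forall x, S x <-> (O x /\ F x).

Definition open_LC {X Y} (tX : Topology X) (tY : Topology Y) (f : X -> Y) : Prop :=
  forall U, is_open tX U -> LC_set tY (image f U).

Definition rel_open {T} (t : Topology T) (A V : T -> Prop) : Prop :=
  exists W, is_open t W /\ forall x, V x <-> (W x /\ A x).
Definition rel_closed {T} (t : Topology T) (A V : T -> Prop) : Prop :=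
  exists F, is_closed t F /\ forall x, V x <-> (F x /\ A x).

(* The restriction f|_{f^{-1}(B)} : f^{-1}(B) -> B is open / closed
   (w.r.t. subspace topologies). *)
Definition restr_open {X Y} (tX : Topology X) (tY : Topology Y) (f : X -> Y)
  (B : Y -> Prop) : Prop :=
  forall U, (forall x, U x -> B (f x)) -> rel_open tX (preimage f B) U ->
    rel_open tY B (image f U).
Definition restr_closed {X Y} (tX : Topology X) (tY : Topology Y) (f : X -> Y)
  (B : Y -> Prop) : Prop :=
  forall F, (forall x, F x -> B (f x)) -> rel_closed tX (preimage f B) F ->
    rel_closed tY B (image f F).

(* Main.v *)
Require Import Defs.
From Stdlib Require Import Reals List.
From Stdlib Require Import Cantor Classical FunctionalExtensionality PropExtensionality Lra.
Open Scope R_scope.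

Lemma open_ext {T} (t : Topology T) (P Q : T -> Prop) :
  is_open t P -> (forall x, P x <-> Q x) -> is_open t Q.
Proof.
  intros HP HPQ.
  assert (E : P = Q).
  { apply functional_extensionality; intro x; apply propositional_extensionality; apply HPQ. }
  now rewrite <- E.
Qed.

Lemma open_or {T} (t : Topology T) (U V : T -> Prop) :
  is_open t U -> is_open t V -> is_open t (fun x => U x \/ V x).
Proof.
  intros HU HV.
  pose proof (@open_union _ t (fun S => S = U \/ S = V)) as H.
  eapply open_ext.
  - apply H. intros S [-> | ->]; assumption.
  - intro x; split.
    + intros [S [[-> | ->] HS]]; auto.
    + intros [Hx | Hx]; [exists U | exists V]; auto.
Qed.

Definition clo {T} (t : Topology T) (S : T -> Prop) (y : T) : Prop :=
  forall N, is_open t N -> N y -> exists z, N z /\ S z.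

Lemma clo_closed {T} (t : Topology T) S : is_closed t (clo t S).
Proof.
  unfold is_closed.
  eapply open_ext.
  - apply (@open_union _ t (fun U => is_open t U /\ forall z, U z -> ~ S z)).
    intros U [HU _]; exact HU.
  - intro y; split.
    + intros [U [[HU HUS] HUy]] Hc.
      destruct (Hc U HU HUy) as [z [Hz1 Hz2]]. exact (HUS z Hz1 Hz2).
    + intro Hn. apply not_all_ex_not in Hn. destruct Hn as [N HN].
      exists N. repeat split.
      * apply NNPP; intro H; apply HN; intro; contradiction.
      * intros z Hz HSz. apply HN. intros _ _. eauto.
      * apply NNPP; intro H; apply HN; intros _ ?; contradiction.
Qed.

Lemma clo_mono {T} (t : Topology T) (A B : T -> Prop) y :
  (forall z, A z -> B z) -> clo t A y -> clo t B y.
Proof.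
  intros HAB H N HN HNy. destruct (H N HN HNy) as [z [? ?]]; eauto.
Qed.

Definition bd {T} (t : Topology T) (L : T -> Prop) (y : T) : Prop := clo t L y /\ ~ L y.

Lemma bd_closed {T} (t : Topology T) L : LC_set t L -> is_closed t (bd t L).
Proof.
  intros [O [F [HO [HF HL]]]].
  unfold is_closed.
  eapply open_ext.
  - apply (open_or t O (fun y => ~ clo t L y)); [exact HO | apply clo_closed].
  - intro y; split.
    + intros [Hy | Hy] [Hc Hn].
      * apply Hn. apply HL. split; auto.
        apply NNPP; intro HnF.
        destruct (Hc _ HF HnF) as [z [Hz1 Hz2]]. apply Hz1. apply HL in Hz2. tauto.
      * contradiction.
    + intro H. destruct (classic (clo t L y)) as [Hc | Hc]; [left | right; auto].
      apply NNPP; intro HnO. apply H. split; auto. intro HLy. apply HL in HLy. tauto.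
Qed.
Lemma piece_open {X Y} (tX : Topology X) (tY : Topology Y) (f : X -> Y)
  (hf : open_LC tX tY f) (W : X -> Prop) (HW : is_open tX W) :
  restr_open tX tY f (bd tY (image f W)).
Proof.
  intros U HU [W' [HW' HUW]].
  set (L := image f (fun x => W' x \/ W x)).
  assert (HLC : LC_set tY L) by (apply hf; apply open_or; auto).
  pose proof (bd_closed tY L HLC) as HE.
  exists (fun y => ~ bd tY L y). split; [exact HE|].
  intro y; split.
  - intros [x [Hx Hfx]]. subst y. split; [|apply HU; auto].
    intros [_ Hn]. apply Hn. exists x. split; auto. left. apply HUW in Hx. tauto.
  - intros [HnE [Hc Hn]].
    assert (HLy : L y).
    { apply NNPP; intro HnL. apply HnE. split; auto.
      eapply clo_mono; [|exact Hc]. intros z [x [Hx Hfx]]. exists x; split; auto. }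
    destruct HLy as [x [[Hx | Hx] Hfx]].
    + exists x. split; auto. apply HUW. split; auto. unfold preimage. rewrite Hfx. split; auto.
    + exfalso. apply Hn. exists x; auto.
Qed.
Definition rr (k : nat) : R := / INR (S k).

Lemma rr_pos k : 0 < rr k.
Proof. unfold rr. apply Rinv_0_lt_compat. apply lt_0_INR. auto with arith. Qed.

Definition Wset {X} (d : X -> X -> R) (D : X -> Prop) (g : X -> nat)
  (l : list (nat * nat)) : X -> Prop :=
  fun x => forall p, In p l -> forall s, D s -> g s = fst p -> rr (snd p) < d s x.

Lemma Wset_open {X} (t : Topology X) (d : X -> X -> R) (D : X -> Prop) (g : X -> nat)
  (hd : is_metric d) (ht : forall U, is_open t U <-> metric_open d U)
  (hg : forall x y, D x -> D y -> g x = g y -> x = y) l :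
  is_open t (Wset d D g l).
Proof.
  apply ht. destruct hd as [hpos [hzero [hsym htri]]].
  induction l as [|p l IH]; intros x Hx.
  - exists 1. split; [lra|]. intros y _ p Hp. destruct Hp.
  - destruct (IH x) as [e1 [He1 H1]].
    { intros q Hq. apply Hx. right; auto. }
    destruct (classic (exists s, D s /\ g s = fst p)) as [[s [Ds Hgs]] | Hno].
    + assert (Hm : rr (snd p) < d s x) by (apply Hx; auto; left; auto).
      exists (Rmin e1 (d s x - rr (snd p))). split.
      * apply Rmin_glb_lt; lra.
      * intros y Hy q Hq s' Ds' Hgs'.
        destruct Hq as [Hq | Hq].
        -- subst q. assert (s' = s) by (apply hg; auto; congruence). subst s'.
           pose proof (Rmin_r e1 (d s x - rr (snd p))).
           pose proof (htri s y x). rewrite (hsym y x) in H0. lra.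
        -- apply (H1 y); auto. pose proof (Rmin_l e1 (d s x - rr (snd p))). lra.
    + exists e1. split; auto. intros y Hy q Hq s' Ds' Hgs'.
      destruct Hq as [Hq | Hq].
      * subst q. exfalso. apply Hno. eauto.
      * apply (H1 y); auto.
Qed.
Lemma ball_open {X} (d : X -> X -> R) (hd : is_metric d) c r :
  metric_open d (fun z => d c z < r).
Proof.
  destruct hd as [hpos [hzero [hsym htri]]].
  intros z Hz. exists (r - d c z). split; [lra|].
  intros w Hw. pose proof (htri c z w). lra.
Qed.

Lemma separate {X} (t : Topology X) (d : X -> X -> R) (D : X -> Prop) (g : X -> nat)
  (hd : is_metric d) (ht : forall U, is_open t U <-> metric_open d U)
  (hg : forall x y, D x -> D y -> g x = g y -> x = y) (hdense : dense t D)
  (K Cl : X -> Prop) (hK : compact_set t K) (hCl : is_closed t Cl)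
  (hdisj : forall x, K x -> ~ Cl x) :
  exists l, (forall x, Cl x -> Wset d D g l x) /\ (forall x, K x -> ~ Wset d D g l x).
Proof.
  pose proof hd as hd'. destruct hd' as [hpos [hzero [hsym htri]]].
  set (Cov := fun U : X -> Prop => exists s k, D s /\ U = (fun z => d s z < rr k) /\
                 (forall z, d s z <= rr k -> ~ Cl z)).
  destruct (hK Cov) as [Ls [HLs1 HLs2]].
  - intros U [s [k [_ [-> _]]]]. apply ht. apply ball_open; auto.
  - intros x Kx.
    assert (Ho : metric_open d (fun z => ~ Cl z)) by (apply ht; exact hCl).
    destruct (Ho x (hdisj x Kx)) as [eps [Heps Hball]].
    destruct (archimed_cor1 (eps / 2)) as [N [HN HN0]]; [lra|].
    destruct N as [|k]; [exfalso; inversion HN0|].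
    assert (Hr : rr k < eps / 2) by exact HN.
    pose proof (rr_pos k).
    destruct (hdense (fun z => d x z < rr k)) as [s [Hs Ds]].
    + apply ht. apply ball_open; auto.
    + exists x. rewrite (proj2 (hzero x x) eq_refl). auto.
    + exists (fun z => d s z < rr k). split.
      * exists s, k. repeat split; auto.
        intros z Hz. apply Hball. pose proof (htri x s z). lra.
      * rewrite hsym. auto.
  - assert (Hl : exists l,
      (forall p, In p l -> exists s, D s /\ g s = fst p /\ forall z, d s z <= rr (snd p) -> ~ Cl z) /\
      (forall U, In U Ls -> exists p, In p l /\ exists s, D s /\ g s = fst p /\
                 forall z, U z -> d s z < rr (snd p))).
    { clear HLs2. induction Ls as [|U Ls IH].
      - exists nil. split; intros ? [].
      - destruct IH as [l [Hl1 Hl2]].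
        { intros V HV. apply HLs1. right; auto. }
        destruct (HLs1 U (or_introl eq_refl)) as [s [k [Ds [HU Hcl]]]].
        exists ((g s, k) :: l). split.
        + intros p [Hp | Hp].
          * subst p. exists s. simpl. auto.
          * auto.
        + intros V [HV | HV].
          * subst V. exists (g s, k). split; [left; auto|]. exists s. simpl.
            repeat split; auto. intros z Hz. rewrite HU in Hz. exact Hz.
          * destruct (Hl2 V HV) as [p [Hp Hs]]. exists p. split; [right|]; auto. }
    destruct Hl as [l [Hl1 Hl2]]. exists l. split.
    + intros x Clx p Hp s' Ds' Hgs'.
      destruct (Hl1 p Hp) as [s [Ds [Hgs Hcl]]].
      assert (s' = s) by (apply hg; auto; congruence). subst s'.
      apply Rnot_le_lt. intro Hle. exact (Hcl x Hle Clx).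
    + intros x Kx HW.
      destruct (HLs2 x Kx) as [U [HU HUx]].
      destruct (Hl2 U HU) as [p [Hp [s [Ds [Hgs Hlt]]]]].
      pose proof (HW p Hp s Ds Hgs). pose proof (Hlt x HUx). lra.
Qed.
Lemma piece_closed {X Y} (tX : Topology X) (tY : Topology Y) (f : X -> Y)
  (d : X -> X -> R) (D : X -> Prop) (g : X -> nat)
  (hd : is_metric d) (ht : forall U, is_open tX U <-> metric_open d U)
  (hg : forall x y, D x -> D y -> g x = g y -> x = y) (hdense : dense tX D)
  (hfib : forall y, compact_set tX (preimage f (fun z => z = y))) :
  restr_closed tX tY f (fun y => forall l, ~ bd tY (image f (Wset d D g l)) y).
Proof.
  intros F HF [Cl [hCl HFC]].
  exists (clo tY (image f F)). split; [apply clo_closed|].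
  intro y; split.
  - intros [x [Fx Hfx]]. subst y. split.
    + intros N _ HN. exists (f x); split; auto. exists x; auto.
    + apply HF; auto.
  - intros [Hc HY0]. apply NNPP; intro Hn.
    destruct (separate tX d D g hd ht hg hdense (preimage f (fun z => z = y)) Cl
                (hfib y) hCl) as [l [Hs1 Hs2]].
    { intros x Hx HClx. apply Hn. exists x. split; auto.
      apply HFC. split; auto. unfold preimage. unfold preimage in Hx. rewrite Hx. auto. }
    apply (HY0 l). split.
    + eapply clo_mono; [|exact Hc]. intros z [x [Fx Hfx]]. exists x. split; auto.
      apply Hs1. apply HFC. auto.
    + intros [x [Wx Hfx]]. exact (Hs2 x Hfx Wx).
Qed.

Fixpoint enc (l : list (nat * nat)) : nat :=
  match l with
  | nil => 0%nat
  | p :: l' => S (Cantor.to_nat (Cantor.to_nat p, enc l'))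
  end.

Lemma enc_inj l1 l2 : enc l1 = enc l2 -> l1 = l2.
Proof.
  revert l2; induction l1 as [|p l1 IH]; intros [|q l2] H; try discriminate; auto.
  assert (H0 : Cantor.to_nat (Cantor.to_nat p, enc l1) = Cantor.to_nat (Cantor.to_nat q, enc l2))
    by (change (S (Cantor.to_nat (Cantor.to_nat p, enc l1)) = S (Cantor.to_nat (Cantor.to_nat q, enc l2))) in H; congruence).
  pose proof (f_equal Cantor.of_nat H0) as H1. rewrite !Cantor.cancel_of_to in H1.
  injection H1 as H2 H3.
  pose proof (f_equal Cantor.of_nat H2) as H4. rewrite !Cantor.cancel_of_to in H4.
  subst q. f_equal. auto.
Qed.

Theorem corollary1 (X Y : Type) (tX : Topology X) (tY : Topology Y)
  (hXm : metrizable tX) (hXs : separable tX)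
  (hYm : metrizable tY) (hYs : separable tY)
  (f : X -> Y) (hf : open_LC tX tY f)
  (hsurj : forall y, exists x, f x = y)
  (hfib : forall y, compact_set tX (preimage f (fun z => z = y))) :
  exists Yn : nat -> (Y -> Prop),
    (forall y, exists n, Yn n y) /\
    (forall n, (1 <= n)%nat -> restr_open tX tY f (Yn n)) /\
    restr_closed tX tY f (Yn 0%nat).
Proof.
  destruct hXm as [d [hd ht]].
  destruct hXs as [D [[g hg] hdense]].
  set (B := fun l => bd tY (image f (Wset d D g l))).
  exists (fun n => match n with
                   | O => fun y => forall l, ~ B l y
                   | S m => fun y => exists l, enc l = m /\ B l y
                   end).
  split; [|split].
  - intro y. destruct (classic (exists l, B l y)) as [[l Hl] | Hno].
    + exists (S (enc l)). eauto.
    + exists O. intros l Hl. apply Hno. eauto.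
  - intros [|m] Hm; [inversion Hm|].
    destruct (classic (exists l, enc l = m)) as [[l0 Hl0] | Hno].
    + assert (E : (fun y => exists l, enc l = m /\ B l y) = B l0).
      { apply functional_extensionality; intro y; apply propositional_extensionality.
        split.
        - intros [l [Hl HB]]. assert (l = l0) by (apply enc_inj; congruence). subst; auto.
        - intro HB. eauto. }
      simpl. rewrite E. apply piece_open; auto. eapply Wset_open; eauto.
    + intros U HU _. exists (fun _ => True). split; [apply open_full|].
      intro y; split.
      * intros [x [Ux Hfx]]. destruct (HU x Ux) as [l [Hl _]]. exfalso; eauto.
      * intros [_ [l [Hl _]]]. exfalso; eauto.
  - apply piece_closed; auto.
Qed.
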